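(* Let $G$ be an $(n,d,\lambda)$-graph, $G'\subseteq G$ a subgraph, and $10\lambda\le\delta\le d$. Suppose $A,B\subseteq V(G)$ satisfy $|A|\le \delta n/(100d)$ and every $v\in A$ has $|N_{G'}(v)\cap B|\ge\delta$. Then $$|N_{G'}(A)\cap B|\ \ge\ \min\left(\frac{\delta^2|A|}{8\lambda^2},\ \frac{\delta n}{10d}\right)\ \ge\ 10|A|.$$
   Context: An $(n,d,\lambda)$-graph is an $n$-vertex $d$-regular graph whose second largest eigenvalue in absolute value is at most $\lambda$. For a vertex $v$, $N_{G'}(v)$ is its neighbourhood in $G'$; for a set $A$, $N_{G'}(A)=\left(\bigcup_{a\in A}N_{G'}(a)\right)\setminus A$ is the external neighbourhood. *)

(* Defs.v *)
From HB Require Import structures.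
From mathcomp Require Import all_boot all_order all_algebra.
Set Implicit Arguments. Unset Strict Implicit. Unset Printing Implicit Defensive.
Import Order.TTheory GRing.Theory Num.Theory.
Local Open Scope ring_scope.

Definition simple_graph (n : nat) (e : rel 'I_n) : Prop :=
  symmetric e /\ irreflexive e.

Definition nbhd (n : nat) (e : rel 'I_n) (v : 'I_n) : {set 'I_n} :=
  [set u | e v u].

Definition ext_nbhd (n : nat) (e : rel 'I_n) (A : {set 'I_n}) : {set 'I_n} :=
  (\bigcup_(a in A) nbhd e a) :\: A.

Definition regular (n : nat) (e : rel 'I_n) (d : nat) : Prop :=
  forall v : 'I_n, #|nbhd e v| = d.

Definition adj_mx (R : nzRingType) (n : nat) (e : rel 'I_n) : 'M[R]_n :=
  \matrix_(i, j) (e i j)%:R.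

(* (n,d,lambda)-graph: n-vertex d-regular simple graph such that, listing the
   eigenvalues of its adjacency matrix with multiplicity (as roots of the
   characteristic polynomial) and removing one copy of the trivial eigenvalue d,
   all remaining eigenvalues have absolute value at most lambda; i.e. the second
   largest eigenvalue in absolute value is at most lambda. *)
Definition ndl_graph (R : realFieldType) (n d : nat) (lam : R) (e : rel 'I_n)
  : Prop :=
  simple_graph e /\ regular e d /\
  exists s : seq R,
    char_poly (adj_mx R e) = \prod_(x <- d%:R :: s) ('X - x%:P) /\
    all (fun x => `|x| <= lam) s.

(* e' is a subgraph of e (on the same vertex set; isolated vertices irrelevant). *)
Definition subgraph (n : nat) (e' e : rel 'I_n) : Prop :=
  symmetric e' /\ forall u v, e' u v -> e u v.

(* Main.v *)
Require Import Defs.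
From HB Require Import structures.
From mathcomp Require Import all_boot all_order all_algebra.
From mathcomp Require Import ring lra zify.
Set Implicit Arguments. Unset Strict Implicit. Unset Printing Implicit Defensive.
Import Order.TTheory GRing.Theory Num.Theory.
Local Open Scope ring_scope.

Section Spec.
Variable R : realFieldType.

Definition dotv k (u w : 'rV[R]_k) : R := \sum_j u 0 j * w 0 j.

Lemma dotvE k (u w : 'rV[R]_k) : dotv u w = (u *m w^T) 0 0.
Proof. by rewrite /dotv mxE; apply: eq_bigr => j _; rewrite mxE. Qed.

Lemma dotvC k (u w : 'rV[R]_k) : dotv u w = dotv w u.
Proof. by apply: eq_bigr => j _; rewrite mulrC. Qed.

Lemma dotvDl k (u v w : 'rV[R]_k) : dotv (u + v) w = dotv u w + dotv v w.
Proof. by rewrite /dotv -big_split; apply: eq_bigr => j _; rewrite mxE mulrDl. Qed.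

Lemma dotvZl k a (u w : 'rV[R]_k) : dotv (a *: u) w = a * dotv u w.
Proof. by rewrite /dotv mulr_sumr; apply: eq_bigr => j _; rewrite mxE mulrA. Qed.

Lemma dotvDr k (u v w : 'rV[R]_k) : dotv w (u + v) = dotv w u + dotv w v.
Proof. by rewrite !(dotvC w) dotvDl. Qed.

Lemma dotvZr k a (u w : 'rV[R]_k) : dotv w (a *: u) = a * dotv w u.
Proof. by rewrite !(dotvC w) dotvZl. Qed.

Lemma dotv_ge0 k (u : 'rV[R]_k) : 0 <= dotv u u.
Proof. by apply: sumr_ge0 => j _; rewrite -expr2 sqr_ge0. Qed.

Lemma dotv_eq0 k (u : 'rV[R]_k) : dotv u u = 0 -> u = 0.
Proof.
move=> H; apply/rowP => j; rewrite mxE.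
have H' : \sum_(i | predT i) u 0 i ^+ 2 = 0.
  by rewrite -[RHS]H /dotv; apply: eq_bigr => i _; rewrite expr2.
have := psumr_eq0P (fun i _ => (sqr_ge0 (u 0 i))) H' (isT : predT j).
by move/eqP; rewrite sqrf_eq0 => /eqP.
Qed.

Lemma dotv_mul k (u w : 'rV[R]_k) (S : 'M[R]_k) : dotv (u *m S) w = dotv u (w *m S^T).
Proof. by rewrite !dotvE trmx_mul trmxK mulmxA. Qed.

Lemma CS k (u w : 'rV[R]_k) : dotv u w ^+ 2 <= dotv u u * dotv w w.
Proof.
have [w0|wn0] := eqVneq (dotv w w) 0.
  have -> : w = 0 *: w by rewrite (dotv_eq0 w0) scaler0.
  by rewrite !(dotvZl, dotvZr) !mul0r expr0n mulr0.
have wp : 0 < dotv w w by rewrite lt_def wn0 dotv_ge0.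
have := dotv_ge0 (dotv w w *: u - dotv u w *: w).
rewrite !(dotvDl, dotvDr, dotvZl, dotvZr) -!scaleN1r !(dotvZl, dotvZr) (dotvC w u).
move=> H.
have : 0 <= dotv w w * (dotv u u * dotv w w - dotv u w ^+ 2).
  by rewrite mulrBr; move: H; set x := dotv u w; set y := dotv w w; set z := dotv u u; nra.
by rewrite pmulr_rge0 // subr_ge0.
Qed.

Section Horner.
Variable m : nat.
Local Notation n := m.+1.
Variable S : 'M[R]_n.
Hypothesis Ssym : S^T = S.
Local Notation H := (horner_mx S).

Lemma H_comm p q : H p *m H q = H q *m H p.
Proof. by rewrite mulmxE -!rmorphM /= mulrC. Qed.

Lemma H_sym p : (H p)^T = H p.
Proof.
elim/poly_ind: p => [|p c IH]; first by rewrite rmorph0 trmx0.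
rewrite rmorphD rmorphM /= horner_mx_X horner_mx_C linearD /= tr_scalar_mx.
by rewrite -mulmxE trmx_mul IH Ssym -{1}(horner_mx_X S) H_comm horner_mx_X.
Qed.

Lemma H_eig p a (v : 'rV[R]_n) : v *m S = a *: v -> v *m H p = p.[a] *: v.
Proof.
move=> Hv; elim/poly_ind: p => [|p c IH]; first by rewrite rmorph0 mulmx0 horner0 scale0r.
rewrite rmorphD rmorphM /= horner_mx_X horner_mx_C -mulmxE mulmxDr mulmxA IH.
by rewrite -scalemxAl Hv mul_mx_scalar scalerA hornerMXaddC scalerDl.
Qed.

Definition Qf (L : R) (v : 'rV[R]_n) := L * dotv v v - dotv (v *m S) (v *m S).

Lemma spec_ind (L : R) (r : seq R) : (forall a, a \in r -> a ^+ 2 <= L) ->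
  forall v : 'rV[R]_n, v *m H (\prod_(a <- r) ('X - a%:P)) = 0 -> 0 <= Qf L v.
Proof.
elim: r => [|a r IH] Hr v.
  rewrite big_nil rmorph1 mulmx1 => ->.
  by rewrite /Qf mul0mx /dotv big1 ?mulr0 ?subr0 // => j _; rewrite mxE mul0r.
have Hm : forall (w : 'rV[R]_n) p q, w *m H p *m H q = w *m H (p * q).
  by move=> w p q; rewrite -mulmxA mulmxE -rmorphM.
have HXa : H ('X - a%:P) = S - a%:M by rewrite rmorphB /= horner_mx_X horner_mx_C.
have dotv0 : forall w : 'rV[R]_n, dotv w 0 = 0.
  by move=> w; rewrite /dotv big1 // => j _; rewrite mxE mulr0.
rewrite big_cons => Hv.
set g := \prod_(x <- r) ('X - x%:P) in Hv IH.
have IH' : forall v, v *m H g = 0 -> 0 <= Qf L v.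
  by apply: IH => x xr; apply: Hr; rewrite inE xr orbT.
case: (boolP (a \in r)) => ar.
  apply: IH'.
  have eg : g = ('X - a%:P) * \prod_(x <- rem a r) ('X - x%:P) by rewrite /g (big_rem a ar).
  rewrite eg in Hv *.
  set g2 := \prod_(x <- rem a r) _ in Hv *.
  set u := v *m H (('X - a%:P) * g2).
  have Hu : dotv u u = 0.
    have -> : u = (v *m H g2) *m H ('X - a%:P) by rewrite /u Hm mulrC.
    rewrite dotv_mul H_sym !Hm.
    have -> : g2 * (('X - a%:P) * ('X - a%:P)) = ('X - a%:P) * (('X - a%:P) * g2).
      by rewrite mulrC mulrA.
    by rewrite Hv dotv0.
  exact: dotv_eq0 Hu.
set c := g.[a].
have c0 : c != 0.
  rewrite /c /g horner_prod prodf_seq_neq0; apply/allP => x xr /=.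
  by rewrite hornerXsubC subr_eq0; apply: contraNneq ar => ->.
set G := H g.
set v1 := c^-1 *: (v *m G).
set v2 := v - v1.
have vGa : v *m G *m S = a *: (v *m G).
  have : v *m G *m H ('X - a%:P) = 0 by rewrite Hm mulrC.
  by rewrite HXa mulmxBr mul_mx_scalar => /eqP; rewrite subr_eq0 => /eqP.
have v1S : v1 *m S = a *: v1 by rewrite /v1 -scalemxAl vGa !scalerA mulrC.
have v2G : v2 *m G = 0.
  have [h eh] : exists h, c%:P - g = h * ('X - a%:P).
    by apply/factor_theorem; rewrite /root hornerE /= hornerN hornerC subrr.
  have cv2 : c *: v2 = v *m H (c%:P - g).
    by rewrite /v2 /v1 scalerBr scalerA mulfV // scale1r rmorphB /= horner_mx_C mulmxBr mul_mx_scalar.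
  suff : c *: (v2 *m G) = 0 by move/eqP; rewrite scaler_eq0 (negPf c0) => /eqP.
  rewrite scalemxAl cv2 Hm eh -mulrA mulrC -Hm Hv mul0mx //.
have ev : v = v1 + v2 by rewrite /v2 addrC subrK.
clearbody v1 v2.
have d12 : dotv v1 v2 = 0.
  apply/eqP; rewrite -(mulIr_eq0 _ (mulIf c0)) /=.
  rewrite mulrC -dotvZl -H_eig // /G dotv_mul H_sym.
  by rewrite -/G v2G dotv0.
have d12S : dotv v1 (v2 *m S) = 0.
  have -> : v2 *m S = v2 *m S^T by rewrite Ssym.
  by rewrite -dotv_mul v1S dotvZl d12 mulr0.
have Q2 := IH' v2 v2G.
rewrite /Qf in Q2 *; rewrite ev mulmxDl v1S !(dotvDl, dotvDr, dotvZl, dotvZr).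
rewrite d12 (dotvC v2 v1) d12 d12S (dotvC (v2 *m S)) d12S.
have := Hr a (mem_head a r); have := dotv_ge0 v1.
set x := dotv v1 v1; move: Q2; set y := dotv v2 v2; set z := dotv (v2 *m S) (v2 *m S).
nra.
Qed.

End Horner.
End Spec.

Section Sim.
Variable R : realFieldType.
Variable m : nat.
Local Notation n := m.+1.
Local Notation o := (@ord0 m).

Definition Pm : 'M[R]_n := \matrix_(i, j) if i == o then 1 else ((i == j)%:R - (j == o)%:R).

Definition Dm (N : 'M[R]_n) (c : R) : 'M[R]_n := \matrix_(i, j)
  if i == o then (if j == o then c else 0) else (if j == o then 0 else N i j - N o j).

Lemma sum_delta (F : 'I_m -> R) i : \sum_j (i == j)%:R * F j = F i.
Proof.
rewrite (bigD1 i) //= eqxx mul1r big1 ?addr0 // => j /negPf.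
by rewrite eq_sym => ->; rewrite mul0r.
Qed.

Lemma sum_delta' (F : 'I_m -> R) i : \sum_j (j == i)%:R * F j = F i.
Proof. by rewrite -(sum_delta F i); apply: eq_bigr => j _; rewrite eq_sym. Qed.

Lemma liftne (j : 'I_m) : (lift o j == o) = false.
Proof. by apply/negP => /eqP /(congr1 val). Qed.

Lemma PmN (N : 'M[R]_n) r c :
  (forall i, \sum_j N i j = r) -> (forall j, \sum_i N i j = c) ->
  Pm *m N = Dm N c *m Pm.
Proof.
move=> Hr Hc; apply/matrixP => i k; rewrite !mxE.
case: (unliftP o i) => [i'|] ->.
  rewrite big_ord_recl big_ord_recl !mxE !liftne eqxx /= mul0r add0r.
  have L1 : \sum_(j < m) Pm (lift o i') (lift o j) * N (lift o j) k = N (lift o i') k.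
    rewrite -(sum_delta (fun j => N (lift o j) k) i'); apply: eq_bigr => j _.
    by rewrite mxE liftne (inj_eq lift_inj) subr0.
  rewrite L1 mulN1r.
  case: (unliftP o k) => [k'|] ->.
    have L2 : \sum_(j < m) Dm N c (lift o i') (lift o j) * Pm (lift o j) (lift o k')
       = N (lift o i') (lift o k') - N o (lift o k').
      rewrite -(sum_delta (fun j => N (lift o i') (lift o j) - N o (lift o j)) k').
      apply: eq_bigr => j _.
      by rewrite !mxE !liftne (inj_eq lift_inj) subr0 mulrC eq_sym.
    by rewrite L2 addrC add0r.
  have L3 : \sum_(j < m) Dm N c (lift o i') (lift o j) * Pm (lift o j) o
       = - (\sum_(j < m) N (lift o i') (lift o j) - \sum_(j < m) N o (lift o j)).
    rewrite -sumrB -sumrN; apply: eq_bigr => j _.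
    by rewrite !mxE !liftne eqxx sub0r mulrN1.
  rewrite L3 add0r.
  have h1 := Hr (lift o i'); have h0 := Hr o.
  rewrite big_ord_recl in h1; rewrite big_ord_recl in h0.
  have e1 : \sum_(j < m) N (lift o i') (lift o j) = r - N (lift o i') o.
    by rewrite -h1 addrC addKr.
  have e0 : \sum_(j < m) N o (lift o j) = r - N o o.
    by rewrite -h0 addrC addKr.
  rewrite e1 e0; ring.
rewrite big_ord_recl [X in _ = X]big_ord_recl !mxE !eqxx /= mul1r.
rewrite [X in _ = _ + X]big1 ?addr0; last by move=> j _; rewrite !mxE liftne mul0r.
have := Hc k; rewrite big_ord_recl => <-.
rewrite mulr1; congr (_ + _).
by apply: eq_bigr => j _; rewrite mxE liftne mul1r.
Qed.

Lemma Pm_unit : Pm \in unitmx.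
Proof.
rewrite -row_free_unit; apply: inj_row_free => x Hx.
have Hk : forall k, (x *m Pm) 0 k = 0 by move=> k; rewrite Hx mxE.
have Hl : forall k' : 'I_m, x 0 (lift o k') = - x 0 o.
  move=> k'; have := Hk (lift o k'); rewrite mxE big_ord_recl !mxE eqxx mulr1.
  under eq_bigr => j _ do rewrite !mxE liftne (inj_eq lift_inj) liftne subr0 mulrC.
  by rewrite sum_delta' addrC => /eqP; rewrite addr_eq0 => /eqP.
have H0 : x 0 o = 0.
  have := Hk o; rewrite mxE big_ord_recl !mxE eqxx mulr1.
  under eq_bigr => j _ do rewrite !mxE liftne eqxx sub0r mulrN1 Hl opprK.
  by rewrite sumr_const card_ord -mulrS => /eqP; rewrite mulrn_eq0 /= => /eqP.
apply/rowP => k; rewrite mxE.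
case: (unliftP o k) => [k'|] ->; last by [].
by rewrite Hl H0 oppr0.
Qed.

Lemma char_sim (N D : 'M[R]_n) : Pm *m N = D *m Pm -> char_poly N = char_poly D.
Proof.
move=> HPN.
set Pp := map_mx (@polyC R) Pm.
have E : Pp *m char_poly_mx N = char_poly_mx D *m Pp.
  rewrite /char_poly_mx mulmxBr mulmxBl scalar_mxC -!map_mxM HPN //.
have := congr1 determinant E; rewrite !det_mulmx.
have dP : \det Pp != 0.
  rewrite det_map_mx polyC_eq0 -unitfE -unitmxE; exact: Pm_unit.
by rewrite [_ * \det Pp]mulrC => /(mulfI dP).
Qed.

Lemma charDm (N : 'M[R]_n) c :
  char_poly (Dm N c) = ('X - c%:P) * \det (char_poly_mx (row' o (col' o (Dm N 0)))).
Proof.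
rewrite /char_poly (expand_det_row _ o) big_ord_recl big1 ?addr0.
  rewrite /cofactor !mxE eqxx /= row'_col'_char_poly_mx expr0 mul1r mulr1n.
  congr (_ * \det (char_poly_mx _)); apply/matrixP => i j; rewrite !mxE !liftne //.
by move=> j _; rewrite !mxE eq_sym liftne eqxx mulr0n polyC0 subr0 mul0r.
Qed.
End Sim.

Lemma arith (R : realFieldType) (a y z l dl k E : R) : 0 < a -> 0 < l -> 10 * l <= dl -> 0 < k -> 0 <= y ->
  dl * a <= k * (a * z) + E -> E^+2 <= l^+2 * a * z -> z <= y + a -> 100 * k * a <= dl ->
  Num.min (dl^+2 * a / (8 * l^+2)) (dl / (10 * k)) <= y /\
  10 * a <= Num.min (dl^+2 * a / (8 * l^+2)) (dl / (10 * k)).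
Proof.
move=> a0 l0 hl k0 y0 h1 h2 h3 h4.
have l2 : 0 < 8 * l^+2 by rewrite pmulr_rgt0 // exprn_gt0.
have k10 : 0 < 10 * k by rewrite pmulr_rgt0.
have s5 : 100 * l^+2 <= dl^+2 by nra.
split.
  rewrite ge_min; case: (lerP (dl / (10 * k)) y) => [hy|hy]; first by apply/orP; right.
  rewrite ltr_pdivlMr // in hy. apply/orP; left.
  rewrite ler_pdivrMr //.
  have s1 : k * z < dl * (11/100) by nra.
  have s2 : dl * a * (89/100) <= E by nra.
  have s3 : (dl * a * (89/100))^+2 <= E^+2.
    rewrite ler_sqr ?nnegrE //; nra.
  have s4 : dl^+2 * a * (7921/10000) <= l^+2 * z.
    have : (dl^+2 * a * (7921/10000)) * a <= (l^+2 * z) * a by nra.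
    by rewrite ler_pM2r.
  nra.
rewrite le_min; apply/andP; split.
  by rewrite ler_pdivlMr //; nra.
by rewrite ler_pdivlMr //; nra.
Qed.

Section Gr.
Variable R : realFieldType.
Variable n : nat.

Definition ind (X : {set 'I_n}) : 'rV[R]_n := \row_j (j \in X)%:R.

Lemma sum_ind (X : {set 'I_n}) : \sum_j ((j \in X)%:R : R) = #|X|%:R.
Proof.
rewrite -sum1_card natr_sum [RHS]big_mkcond /=; apply: eq_bigr => j _.
by case: (j \in X).
Qed.

Lemma dot_ind X Y : dotv (ind X) (ind Y) = #|X :&: Y|%:R.
Proof.
rewrite /dotv -sum_ind; apply: eq_bigr => j _; rewrite !mxE inE.
by case: (j \in X); case: (j \in Y); rewrite ?mulr1 ?mulr0.
Qed.

Lemma dot_indJ X Y : dotv (ind X *m const_mx 1) (ind Y) = #|X|%:R * #|Y|%:R.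
Proof.
rewrite /dotv -[#|Y|%:R]sum_ind mulr_sumr; apply: eq_bigr => j _; rewrite !mxE.
congr (_ * _).
by rewrite -sum_ind; apply: eq_bigr => i _; rewrite !mxE mulr1.
Qed.

Lemma dot_indM (e : rel 'I_n) X Y :
  dotv (ind X *m adj_mx R e) (ind Y) = \sum_i (i \in X)%:R * #|nbhd e i :&: Y|%:R.
Proof.
rewrite /dotv.
under eq_bigr => k _ do rewrite !mxE big_distrl /=.
rewrite exchange_big /=; apply: eq_bigr => i _.
rewrite -sum_ind mulr_sumr; apply: eq_bigr => k _.
rewrite !mxE !inE -mulrA; congr (_ * _).
by case: (e i k); case: (k \in Y); rewrite ?mulr1 ?mulr0.
Qed.
End Gr.

Theorem lemma3p9 (R : realFieldType) (n d : nat) (lam delta : R)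
  (e e' : rel 'I_n) (A B : {set 'I_n}) :
  @ndl_graph R n d lam e ->
  subgraph e' e ->
  10 * lam <= delta -> delta <= d%:R ->
  #|A|%:R <= delta * n%:R / (100 * d%:R) ->
  (forall v, v \in A -> delta <= #|nbhd e' v :&: B|%:R) ->
  Num.min (delta ^+ 2 * #|A|%:R / (8 * lam ^+ 2)) (delta * n%:R / (10 * d%:R))
    <= #|ext_nbhd e' A :&: B|%:R
  /\ 10 * #|A|%:R
    <= Num.min (delta ^+ 2 * #|A|%:R / (8 * lam ^+ 2)) (delta * n%:R / (10 * d%:R)).
Proof.
move=> [[esym eirr] [ereg [s [Hchar Hs]]]] [e'sym e'sub] Hl Hd HA Hdeg.
have e10 : delta * n%:R / (10 * d%:R) = 10 * (delta * n%:R / (100 * d%:R)).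
  have h : (10:R)^-1 = 10 * 100^-1 by field.
  rewrite !invfM h; ring.
case: (posnP #|A|) => [a0|apos].
  rewrite a0 mulr0 mul0r; split.
    by rewrite ge_min; apply/orP; left.
  rewrite le_min e10 mulr0 lexx /=; rewrite a0 in HA.
  by rewrite pmulr_rge0.
have dpos : (0 < d)%N.
  case: (posnP d) => // d0; rewrite d0 mulr0 invr0 mulr0 in HA.
  by move: HA; rewrite leNgt ltr0n apos.
destruct n as [|m].
  by move: apos; have := max_card (mem A); rewrite card_ord leqn0 => /eqP ->.
set o := @ord0 m.
set M := adj_mx R e.
set nR := (m.+1)%:R : R.
set dR := d%:R : R.
set k := dR / nR.
set J := const_mx 1 : 'M[R]_m.+1.
set M' := M - k *: J.
have nR0 : nR != 0 by rewrite pnatr_eq0.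
have nRp : 0 < nR by rewrite ltr0n.
have dRp : 0 < dR by rewrite ltr0n.
have kp : 0 < k by rewrite divr_gt0.
have Msym : M^T = M by apply/matrixP => i j; rewrite !mxE esym.
have Mrow : forall i, \sum_j M i j = dR.
  move=> i; rewrite /dR -(ereg i) /nbhd cardsE -sum1_card natr_sum [RHS]big_mkcond /=.
  by apply: eq_bigr => j _; rewrite mxE -topredE /=; case: (e i j).
have Mcol : forall j, \sum_i M i j = dR.
  move=> j; rewrite -(Mrow j); apply: eq_bigr => i _; by rewrite -{1}Msym mxE.
have M'sym : M'^T = M' by rewrite /M' linearB /= linearZ /= Msym trmx_const.
have M'row : forall i, \sum_j M' i j = 0.
  move=> i; transitivity (\sum_j (M i j - k)); first by apply: eq_bigr => j _; rewrite !mxE mulr1.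
  by rewrite sumrB Mrow sumr_const card_ord /k -mulr_natr divfK // subrr.
have M'col : forall j, \sum_i M' i j = 0.
  move=> j; rewrite -[RHS](M'row j); apply: eq_bigr => i _; by rewrite -{1}M'sym mxE.
have cM := char_sim (PmN Mrow Mcol).
have cM' := char_sim (PmN M'row M'col).
rewrite !charDm in cM cM'.
have ED : row' o (col' o (Dm M' 0)) = row' o (col' o (Dm M 0)).
  by apply/matrixP => i j; rewrite !mxE !liftne !mulr1; ring.
rewrite ED in cM'.
have KE : \det (char_poly_mx (row' o (col' o (Dm M 0)))) = \prod_(x <- s) ('X - x%:P).
  apply: (mulfI (negbT (polyXsubC_eq0 dR))).
  by rewrite -cM Hchar big_cons.
rewrite KE polyC0 subr0 in cM'.
have cM'E : char_poly M' = \prod_(x <- 0 :: s) ('X - x%:P) by rewrite big_cons polyC0 subr0.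
have Qpos : forall v, 0 <= Qf M' (lam^+2) v.
  move=> v; apply: (spec_ind M'sym (r := 0 :: s)).
    move=> x; rewrite inE => /orP [/eqP ->|xs]; first by rewrite expr0n /= sqr_ge0.
    have := allP Hs x xs => /= hx.
    move: hx; rewrite ler_norml => /andP [h1 h2]; nra.
  by rewrite -cM'E Cayley_Hamilton mulmx0.
have ss : size s = m.
  by have := size_char_poly M; rewrite Hchar size_prod_XsubC /= => -[].
have mpos : (0 < m)%N.
  case: (posnP m) => // m0; exfalso.
  have : nbhd e o = set0.
    apply/setP => u; rewrite !inE.
    have uo : u = o by apply/val_inj => /=; have := ltn_ord u; move: (val u) => x; rewrite m0 ltnS leqn0 => /eqP.
    by rewrite uo eirr.
  by move=> h; move: (ereg o); rewrite h cards0 => d0; rewrite -d0 in dpos.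
have lam0 : 0 <= lam.
  case: s ss Hs {Hchar KE cM' cM'E Qpos} => [|x s'] ss Hs; first by rewrite -ss in mpos.
  move: Hs => /andP [hx _]; exact: le_trans (normr_ge0 x) hx.
have klam : k ^+ 2 <= lam ^+ 2.
  have := Qpos (ind R [set o]); rewrite /Qf dot_ind setIid cards1 mulr1 subr_ge0.
  apply: le_trans.
  set w := ind R [set o] *m M'.
  have wo : w 0 o = - k.
    rewrite /w mxE (bigD1 o) //= big1 ?addr0; last first.
      by move=> i io; rewrite !mxE inE (negPf io) mul0r.
    by rewrite !mxE inE eqxx mul1r eirr mulr1 sub0r.
  rewrite /dotv (bigD1 o) //= wo -expr2 sqrrN lerDl.
  by apply: sumr_ge0 => j _; rewrite -expr2 sqr_ge0.
have lamp : 0 < lam.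
  rewrite lt_def lam0 andbT; apply/eqP => l0; move: klam; rewrite l0 expr0n /=.
  have : 0 < k ^+ 2 by rewrite exprn_gt0.
  by move=> h1 h2; have := lt_le_trans h1 h2; rewrite ltxx.
set Y := ext_nbhd e' A :&: B.
set Z := Y :|: A.
have h3 : #|Z|%:R <= #|Y|%:R + #|A|%:R :> R.
  by rewrite -natrD ler_nat leq_card_setU.
have hsub : forall i, i \in A -> nbhd e' i :&: B \subset nbhd e i :&: Z.
  move=> i iA; apply/subsetP => u; rewrite !inE => /andP [hu hB].
  rewrite (e'sub _ _ hu) /=.
  case: (boolP (u \in A)) => uA; first by rewrite orbT.
  rewrite hB andbT /= orbF.
  by apply/bigcupP; exists i => //; rewrite inE.
set a := #|A|%:R : R.
set z := #|Z|%:R : R.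
set E := dotv (ind R A *m M') (ind R Z).
have h1 : delta * a <= k * (a * z) + E.
  have -> : k * (a * z) + E = dotv (ind R A *m M) (ind R Z).
    have -> : M = M' + k *: J by rewrite /M' subrK.
    rewrite mulmxDr -scalemxAr dotvDl dotvZl dot_indJ addrC. reflexivity.
  rewrite dot_indM /a -(sum_ind R A) big_distrr /=; apply: ler_sum => i _.
  case: (boolP (i \in A)) => iA; last by rewrite mulr0 mul0r.
  rewrite mulr1 mul1r; apply: (le_trans (Hdeg i iA)); rewrite ler_nat.
  exact: subset_leq_card (hsub i iA).
have h2 : E ^+ 2 <= lam ^+ 2 * a * z.
  apply: (le_trans (CS _ _)); rewrite dot_ind setIid -/z.
  apply: ler_wpM2r; first by rewrite ler0n.
  by have := Qpos (ind R A); rewrite /Qf dot_ind setIid subr_ge0.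
have h4 : 100 * k * a <= delta.
  rewrite ler_pdivlMr ?pmulr_rgt0 // in HA.
  have -> : 100 * k * a = (a * (100 * dR)) / nR by rewrite /k; ring.
  by rewrite ler_pdivrMr.
have -> : delta * nR / (10 * dR) = delta / (10 * k).
  have e1 : (1 + m%:R : R) = nR by rewrite /nR -natr1 addrC.
  by rewrite /k; field; rewrite e1 nR0 (gt_eqF dRp).
have delta0 : 10 * lam <= delta := Hl.
have apos' : 0 < a by rewrite ltr0n.
exact: (arith apos' lamp Hl kp (ler0n _ _) h1 h2 h3 h4).
Qed.
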